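(* Let $G=(V,E)$ be a finite simple undirected graph, $k\ge1$ an integer, $S\subseteq V$ a $k$-plex, and $C\subseteq V$ with $C\cap S=\emptyset$. Let $v\in C$, and list the neighbors of $v$ in $C$ as $N(v)\cap C=\{v_1,\dots,v_d\}$ so that $|\overline{N}_{v_1}(S)|\le |\overline{N}_{v_2}(S)|\le\cdots\le|\overline{N}_{v_d}(S)|$. For $0\le i\le d$ let $T^i=\{v_1,\dots,v_i\}$ and let $$r=\max\Big\{i\in\{0,\dots,d\} : \sum_{u\in T^i}|\overline{N}_u(S)|\le \mathrm{sup}(S)\Big\}.$$ Then every $k$-plex $S'$ with $S\cup\{v\}\subseteq S'\subseteq S\cup C$ satisfies $|S'|\le |S|+k-|\overline{N}_v(S)|+r$.
   Context: $N(x)$ denotes the set of neighbors of $x$ in $G$ ($x\notin N(x)$). For $x\in V$ and $T\subseteq V$, $\overline{N}_x(T)=T\setminus N(x)$ is the set of non-neighbors of $x$ in $T$; note that if $x\in T$ then $x\in\overline{N}_x(T)$. A set $T\subseteq V$ is a $k$-plex if every vertex $u\in T$ satisfies $|N(u)\cap T|\ge |T|-k$ (equivalently $|\overline{N}_u(T)|\le k$). For a $k$-plex $S$, $\mathrm{sup}(S)=\sum_{w\in S}\big(k-|\overline{N}_w(S)|\big)$. *)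

(* Defs.v *)
From mathcomp Require Import all_boot.
Set Implicit Arguments. Unset Strict Implicit. Unset Printing Implicit Defensive.

Definition simple_graph (T : finType) (e : rel T) : Prop :=
  symmetric e /\ irreflexive e.

Section KPlex.
Variables (T : finType) (e : rel T).

Definition nbhd (x : T) : {set T} := [set y | e x y].

Definition nonnbr (x : T) (A : {set T}) : {set T} := A :\: nbhd x.

(* k-plex: every u in A has at most k non-neighbours in A (counting itself) *)
Definition is_kplex (k : nat) (A : {set T}) : Prop :=
  forall u, u \in A -> #|nonnbr u A| <= k.

(* sup(S) = sum_{w in S} (k - |nonN_w(S)|); for a k-plex every summand is
   a genuine (non-truncated) natural-number difference. *)
Definition kplex_sup (k : nat) (S : {set T}) : nat :=
  \sum_(w in S) (k - #|nonnbr w S|).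

Definition r_bound (k : nat) (S : {set T}) (s : seq T) : nat :=
  \max_(i < (size s).+1 | \sum_(u <- take i s) #|nonnbr u S| <= kplex_sup k S) (i : nat).

End KPlex.

(* Main.v *)
Require Import Defs.
From mathcomp Require Import all_boot.
From mathcomp Require Import zify.

Section Aux.
Variables (T : eqType) (f : T -> nat).
Let le := fun a b => f a <= f b.

Lemma takeL (s : seq T) (x : T) n : path le x s -> n <= size s ->
  \sum_(u <- take n (x :: s)) f u <= \sum_(u <- take n s) f u.
Proof.
elim: s x n => [|y s IH] x [|n] //=; try by rewrite ?big_nil.
move=> /andP [hxy hp] hn; rewrite !big_cons.
apply: leq_add => //; exact: IH.
Qed.

Lemma takeM (s t : seq T) : sorted le s -> subseq t s ->
  \sum_(u <- take (size t) s) f u <= \sum_(u <- t) f u.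
Proof.
elim: s t => [|x s IH] t.
  by move=> _ /eqP -> /=; rewrite !big_nil.
case: t => [|y t]; first by move=> _ _; rewrite /= !big_nil.
move=> hs /=; have hs' := path_sorted hs.
case: eqP => [-> |_] hsub.
  by rewrite !big_cons leq_add2l; apply: IH.
apply: leq_trans (IH _ hs' hsub).
apply: takeL => //; exact: size_subseq hsub.
Qed.
End Aux.

Lemma card_sum (T : finType) (e : rel T) (A : {set T}) x :
  #|A :\: nbhd e x| = \sum_(y in A) ~~ e x y.
Proof.
rewrite -sum1_card big_mkcond [RHS]big_mkcond; apply: eq_bigr => y _.
by rewrite !inE; case: (y \in A); case: (e x y).
Qed.

Theorem lemma5 (T : finType) (e : rel T) (k : nat) (S C : {set T}) (v : T)
  (s : seq T) :
  simple_graph e -> 1 <= k ->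
  is_kplex e k S ->
  [disjoint C & S] ->
  v \in C ->
  perm_eq s (enum (nbhd e v :&: C)) ->
  sorted (fun a b => #|nonnbr e a S| <= #|nonnbr e b S|) s ->
  forall S' : {set T},
    is_kplex e k S' ->
    v |: S \subset S' -> S' \subset S :|: C ->
    #|S'| <= #|S| + k - #|nonnbr e v S| + r_bound e k S s.
Proof.
move=> [esym eirr] hk hS hdis hv hperm hsort S' hS' hsub1 hsub2.
have vS' : v \in S' by apply: (subsetP hsub1); rewrite !inE eqxx.
have SS' : S \subset S'.
  by apply: subset_trans hsub1; apply/subsetP => x hx; rewrite !inE hx orbT.
set A := S' :\: S.
set B := A :&: nbhd e v.
have hcard : #|S'| = #|S| + #|A :\: nbhd e v| + #|B|.
  rewrite -(cardsID S S') (setIidPr SS') -/A -(cardsID (nbhd e v) A).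
  by rewrite -/B; lia.
have hv1 : #|nonnbr e v S| + #|A :\: nbhd e v| <= k.
  apply: leq_trans (hS' v vS'); rewrite /nonnbr -(cardsID S (S' :\: nbhd e v)).
  apply: leq_add; apply: subset_leq_card; apply/subsetP => x; rewrite !inE.
    by case/andP => -> xS; rewrite xS (subsetP SS').
  by case/and3P => -> -> ->.
have BC : B \subset nbhd e v :&: C.
  apply/subsetP => x; rewrite !inE => /andP [/andP [xS xS'] ->] /=.
  by move: (subsetP hsub2 x xS'); rewrite !inE (negbTE xS).
have huniq : uniq s by rewrite (perm_uniq hperm) enum_uniq.
have hmem : forall x, (x \in s) = (x \in nbhd e v :&: C).
  by move=> x; rewrite (perm_mem hperm) mem_enum.
set t := filter (mem B) s.
have tperm : perm_eq t (enum B).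
  apply: uniq_perm; first exact: filter_uniq.
    exact: enum_uniq.
  move=> x; rewrite mem_filter mem_enum hmem /=.
  by case xB: (x \in B) => //=; rewrite (subsetP BC).
have tsize : size t = #|B| by rewrite (perm_size tperm) cardE.
have hsumB : \sum_(u <- t) #|nonnbr e u S| = \sum_(u in B) #|nonnbr e u S|.
  by rewrite (perm_big _ tperm) big_enum.
have hdc : \sum_(u in B) #|nonnbr e u S| = \sum_(w in S) #|nonnbr e w B|.
  rewrite /nonnbr.
  under eq_bigr do rewrite card_sum.
  under [RHS]eq_bigr do rewrite card_sum.
  rewrite exchange_big /=; apply: eq_bigr => w _; apply: eq_bigr => u _.
  by rewrite esym.
have hsup : \sum_(w in S) #|nonnbr e w B| <= kplex_sup e k S.
  rewrite /kplex_sup; apply: leq_sum => w wS.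
  have : #|nonnbr e w S| + #|nonnbr e w B| <= k.
    apply: leq_trans (hS' w (subsetP SS' w wS)).
    rewrite /nonnbr -(cardsID S (S' :\: nbhd e w)).
    apply: leq_add; apply: subset_leq_card; apply/subsetP => x; rewrite !inE.
      by case/andP => -> xS; rewrite xS (subsetP SS').
    by case/and3P => -> /andP [-> ->].
  lia.
have hB : #|B| <= r_bound e k S s.
  have hlt : #|B| < (size s).+1.
    rewrite ltnS (perm_size hperm) -cardE; exact: subset_leq_card.
  rewrite /r_bound.
  apply: (@leq_bigmax_cond _ (fun i : 'I_(size s).+1 =>
     \sum_(u <- take i s) #|nonnbr e u S| <= kplex_sup e k S)
     (fun i : 'I_(size s).+1 => (i : nat)) (Ordinal hlt)) => /=.
  rewrite -tsize; apply: leq_trans ((@takeM _ (fun u => #|nonnbr e u S|) s t hsort (filter_subseq (mem B) s))) _.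
  by rewrite hsumB hdc.
rewrite hcard; lia.
Qed.
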